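(* Let $M$ be a Puiseux monoid and let $R$ be an integral domain. Suppose $f = \alpha_n X^{q_n} + \dots + \alpha_1 X^{q_1} + \alpha_0 \in R[M]$ is written in canonical form (so $q_n > \dots > q_1 > 0$ and all $\alpha_j \neq 0$). If there is a prime ideal $P$ of $R$ such that $\alpha_n \notin P$, $\alpha_j \in P$ for all $0 \le j < n$, and $\alpha_0 \notin P^2$, then $f$ cannot be written as a product $gh$ with $g,h \in R[M]\setminus R$.
   Context: A Puiseux monoid is an additive submonoid of $(\mathbb{Q}_{\ge 0},+)$. For a commutative ring $R$ and a Puiseux monoid $M$, $R[M]$ denotes the semigroup ring of $M$ over $R$ (finite formal sums $\sum_{s\in M} f(s)X^s$ with $X^sX^t=X^{s+t}$). A canonical form of a nonzero element is a representation $\sum_i \alpha_iX^{q_i}$ with all coefficients nonzero and pairwise distinct exponents listed in decreasing order. *)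

(* Defs.v *)
From HB Require Import structures.
From mathcomp Require Import all_boot all_order all_algebra.
From mathcomp Require Import ring_quotient.
Set Implicit Arguments. Unset Strict Implicit. Unset Printing Implicit Defensive.
Import Order.TTheory GRing.Theory Num.Theory.
Local Open Scope ring_scope.

Definition puiseux_monoid (M : {pred rat}) : Prop :=
  [/\ 0 \in M,
      (forall a b, a \in M -> b \in M -> a + b \in M) &
      (forall a, a \in M -> 0 <= a)].

(* Elements of the semigroup ring R[M] are represented as finite formal sums
   sum_i c_i X^{e_i}, given as a list of (coefficient, exponent) pairs with all
   exponents in M.  Two formal sums denote the same element iff they have the
   same coefficient function. *)
Definition fsum (R : nzRingType) := seq (R * rat).

Definition coef (R : nzRingType) (f : fsum R) (q : rat) : R :=
  \sum_(x <- f | x.2 == q) x.1.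

Definition in_semiring (R : nzRingType) (M : {pred rat}) (f : fsum R) : Prop :=
  all (fun x => x.2 \in M) f.

Definition fmul (R : nzRingType) (g h : fsum R) : fsum R :=
  [seq (a.1 * b.1, a.2 + b.2) | a <- g, b <- h].

Definition feq (R : nzRingType) (f g : fsum R) : Prop :=
  forall q, coef f q = coef g q.

Definition is_const (R : nzRingType) (g : fsum R) : Prop :=
  forall q, q != 0 -> coef g q = 0.

Definition in_ideal_sq (R : nzRingType) (P : {pred R}) (a : R) : Prop :=
  exists s : seq (R * R),
    all (fun x => (x.1 \in P) && (x.2 \in P)) s /\ a = \sum_(x <- s) x.1 * x.2.

Definition canon_sum (R : nzRingType) (n : nat) (alpha : nat -> R) (q : nat -> rat)
  : fsum R := [seq (alpha j, q j) | j <- iota 0 n.+1].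

(* Main.v *)
Require Import Defs.
From HB Require Import structures.
From mathcomp Require Import all_boot all_order all_algebra.
From mathcomp Require Import ring_quotient.
From mathcomp Require Import ring lra.
Import Order.TTheory GRing.Theory Num.Theory.
Local Open Scope ring_scope.

Section S.
Variable R : idomainType.
Implicit Types g h : fsum R.

Lemma coefM g h u : coef (fmul g h) u =
  \sum_(x <- g) \sum_(y <- h | x.2 + y.2 == u) x.1 * y.1.
Proof.
rewrite /coef /fmul big_mkcond big_allpairs_dep /=.
by apply: eq_bigr => x _; rewrite [RHS]big_mkcond.
Qed.

Lemma coefMl g h u : coef (fmul g h) u = \sum_(x <- g) x.1 * coef h (u - x.2).
Proof.
rewrite coefM; apply: eq_bigr => x _; rewrite /coef mulr_sumr.
apply: eq_bigl => y; apply/eqP/eqP => H; lra.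
Qed.

Lemma coefMr g h u : coef (fmul g h) u = \sum_(y <- h) coef g (u - y.2) * y.1.
Proof.
rewrite /coef /fmul big_mkcond big_allpairs_dep /=.
rewrite exchange_big /=; apply: eq_bigr => y _.
rewrite mulr_suml [RHS]big_mkcond /=; apply: eq_bigr => x _.
have -> : (x.2 == u - y.2) = (x.2 + y.2 == u) by apply/eqP/eqP => H; lra.
by case: ifP.
Qed.

Lemma coefC g h u : coef (fmul g h) u = coef (fmul h g) u.
Proof.
rewrite coefMl coefMr; apply: eq_bigr => x _; by rewrite mulrC.
Qed.

Definition qideal (Q : {pred R}) :=
  [/\ 0 \in Q, (forall a b, a \in Q -> b \in Q -> a + b \in Q),
      (forall a b, b \in Q -> a * b \in Q) &
      (forall a b, a \notin Q -> b \notin Q -> a * b \notin Q)].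

Section Q.
Variable Q : {pred R}.
Hypothesis hQ : qideal Q.

Lemma sumQ (I : Type) (r : seq I) (p : pred I) (F : I -> R) :
  (forall i, p i -> F i \in Q) -> \sum_(i <- r | p i) F i \in Q.
Proof. case: hQ => Q0 QD _ _ H; exact: (big_ind (fun x => x \in Q)). Qed.

Lemma mulQl a b : a \in Q -> a * b \in Q.
Proof. case: hQ => _ _ QM _ H; rewrite mulrC; exact: QM. Qed.

Lemma addQn a b : a \in Q -> b \notin Q -> a + b \notin Q.
Proof.
case: hQ => Q0 QD QM _ aQ bQ; apply/negP => abQ; move/negP: bQ; apply.
have -> : b = (-1) * a + (a + b) by ring.
by apply: QD => //; apply: QM.
Qed.

Lemma addQn' a b : a \in Q -> b \notin Q -> b + a \notin Q.
Proof. by move=> ? ?; rewrite addrC addQn. Qed.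
End Q.

Definition ltd (dir : bool) (a b : rat) := if dir then a < b else b < a.

Lemma key dir Q g h s t : qideal Q -> coef g s \notin Q -> coef h t \notin Q ->
  (forall a, ltd dir a s -> coef g a \in Q) ->
  (forall b, ltd dir b t -> coef h b \in Q) ->
  coef (fmul g h) (s + t) \notin Q.
Proof.
move=> hQ gs ht gmin hmin; have hQ' := hQ; case: hQ' => Q0 QD QM Qp.
rewrite coefM (bigID (fun x => ltd dir x.2 s)) /=.
apply: addQn => //; last rewrite (bigID (fun x => x.2 == s)) /=.
  under eq_bigr do rewrite big_mkcond /=.
  rewrite exchange_big /=; apply: sumQ => // y _.
  have -> : \sum_(i <- g | ltd dir i.2 s)
       (if i.2 + y.2 == s + t then i.1 * y.1 else 0) =
     (\sum_(i <- g | ltd dir i.2 s && (i.2 == s + t - y.2)) i.1) * y.1.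
    rewrite mulr_suml big_mkcond [RHS]big_mkcond; apply: eq_bigr => x _.
    have -> : (x.2 == s + t - y.2) = (x.2 + y.2 == s + t) by apply/eqP/eqP => H; lra.
    by case: (ltd dir x.2 s).
  apply: mulQl => //.
  case: (boolP (ltd dir (s + t - y.2) s)) => hl.
    rewrite (eq_bigl (fun x => x.2 == s + t - y.2)); first exact: gmin.
    by move=> x /=; case: eqP => [->|_]; rewrite ?hl ?andbF.
  rewrite big_pred0 // => x /=; case: eqP => [->|_]; by rewrite ?(negbTE hl) ?andbF.
apply: addQn' => //.
  apply: sumQ => // x /andP[nl ns].
  have -> : \sum_(y <- h | x.2 + y.2 == s + t) x.1 * y.1 = x.1 * coef h (s + t - x.2).
    rewrite /coef mulr_sumr; apply: eq_bigl => y; apply/eqP/eqP => H; lra.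
  apply: QM; apply: hmin.
  move: nl ns; rewrite /ltd; case: (dir) => nl ns.
    have : s < x.2 by rewrite lt_neqAle eq_sym ns leNgt.
    move=> H; lra.
  have : x.2 < s by rewrite lt_neqAle ns leNgt.
  move=> H; lra.
have -> : \sum_(i <- g | ~~ ltd dir i.2 s && (i.2 == s))
     \sum_(y <- h | i.2 + y.2 == s + t) i.1 * y.1 = coef g s * coef h t.
  rewrite /coef mulr_suml; apply: eq_big => [x|x /andP[_ /eqP ->]].
    case: eqP => [->|]; last by rewrite andbF.
    by rewrite /ltd; case: (dir); rewrite ltxx.
  rewrite mulr_sumr; apply: eq_bigl => y; apply/eqP/eqP => H; lra.
exact: Qp.
Qed.

Lemma ltd_irr dir a : ~~ ltd dir a a.
Proof. by rewrite /ltd; case: dir; rewrite ltxx. Qed.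

Lemma ltd_trans dir a b c : ltd dir a b -> ltd dir b c -> ltd dir a c.
Proof. by rewrite /ltd; case: dir => H1 H2; lra. Qed.

Lemma ext_min dir (E : seq rat) : E != [::] ->
  exists2 s, s \in E & forall a, a \in E -> ~~ ltd dir a s.
Proof.
elim: E => // a E IH _.
case: (eqVneq E [::]) => [->|En].
  by exists a; rewrite ?inE // => b; rewrite inE => /eqP ->; apply: ltd_irr.
have [s sE smin] := IH En.
case: (boolP (ltd dir a s)) => hl.
  exists a; first by rewrite inE eqxx.
  move=> b; rewrite inE => /predU1P [->|bE]; first exact: ltd_irr.
  apply/negP => hb; move/negP: (smin b bE); apply; exact: ltd_trans hb hl.
exists s; first by rewrite inE sE orbT.
by move=> b; rewrite inE => /predU1P [->|bE] //; apply: smin.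
Qed.

Lemma coef_nz_mem g a : coef g a != 0 -> a \in map snd g.
Proof.
apply: contraR => H; rewrite /coef big_seq_cond big1 // => x /andP[xg /eqP xa].
by move: H; rewrite -xa map_f.
Qed.

Lemma ext_coef dir Q g : qideal Q -> (exists a, coef g a \notin Q) ->
  exists s, coef g s \notin Q /\ forall a, ltd dir a s -> coef g a \in Q.
Proof.
move=> [Q0 _ _ _] [a ha].
set E := [seq b <- map snd g | coef g b \notin Q].
have aE : a \in E.
  rewrite mem_filter ha /=; apply: coef_nz_mem; apply/eqP => H.
  by move: ha; rewrite H Q0.
have [|s sE smin] := @ext_min dir E.
  by apply/eqP => H; move: aE; rewrite H.
exists s; split; first by move: sE; rewrite mem_filter => /andP[].
move=> b hb; apply/negPn/negP => nb.
have bE : b \in E.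
  rewrite mem_filter nb /=; apply: coef_nz_mem; apply/eqP => H.
  by move: nb; rewrite H Q0.
by move: (smin b bE); rewrite hb.
Qed.

Lemma qidealP (P : {pred R}) : idealr_closed P -> prime_idealr_closed P -> qideal P.
Proof.
move=> [P0 P1 PS] Pp; split => //.
- by move=> a b aP bP; have := PS 1 a b aP bP; rewrite mul1r.
- by move=> a b bP; have := PS a b 0 bP P0; rewrite addr0.
- move=> a b aP bP; apply/negP => /Pp; by rewrite (negbTE aP) (negbTE bP).
Qed.

Lemma qideal0 : qideal [pred x : R | x == 0].
Proof.
split; first by rewrite inE.
- by move=> a b; rewrite !inE => /eqP -> /eqP ->; rewrite addr0.
- by move=> a b; rewrite !inE => /eqP ->; rewrite mulr0.
- by move=> a b; rewrite !inE => ha hb; rewrite mulf_neq0.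
Qed.

Lemma coef_M (M : {pred rat}) g a : in_semiring M g -> coef g a != 0 -> a \in M.
Proof.
move=> gM /coef_nz_mem /mapP [x xg ->]; exact: (allP gM).
Qed.

Lemma coef0 (M : {pred rat}) g h : (forall a, a \in M -> 0 <= a) ->
  in_semiring M g -> in_semiring M h ->
  coef (fmul g h) 0 = coef g 0 * coef h 0.
Proof.
move=> Mge gM hM; rewrite coefMl /coef mulr_suml [RHS]big_mkcond /=.
rewrite big_seq [RHS]big_seq; apply: eq_bigr => x xg.
case: eqP => [->|x0]; first by rewrite subrr.
have x2 : 0 <= x.2 by apply: Mge; exact: (allP gM).
case: (eqVneq (coef h (0 - x.2)) 0) => [H|H]; first by rewrite /coef in H; rewrite H mulr0.
have := Mge _ (@coef_M M h _ hM H).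
have : x.2 != 0 by apply/eqP.
move=> xn le; have : x.2 = 0 by lra.
by move/eqP: xn.
Qed.


Lemma sum_notin (Q : {pred R}) (I : Type) (r : seq I) (F : I -> R) :
  qideal Q -> \sum_(i <- r) F i \notin Q -> exists i, F i \notin Q.
Proof.
move=> [Q0 QD _ _]; elim: r => [|a r IH]; first by rewrite big_nil Q0.
rewrite big_cons; case: (boolP (F a \in Q)) => Fa H; last by exists a.
apply: IH; apply/negP => H'; move/negP: H; apply; exact: QD.
Qed.

Lemma side (M : {pred rat}) (P : {pred R}) g h (qn : rat) :
  (forall a, a \in M -> 0 <= a) -> qideal P ->
  in_semiring M g -> in_semiring M h -> ~ is_const g ->
  (forall u, coef (fmul g h) u \notin P -> u = qn) ->
  coef (fmul g h) qn \notin P ->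
  (forall u, coef (fmul g h) u != 0 -> u <= qn) ->
  coef g 0 \in P.
Proof.
move=> Mge hP gM hM gnc F1 F2 F3.
have hP' := hP; case: hP' => P0 PD PM Pp.
have gex : exists a, coef g a \notin P.
  move: F2; rewrite coefMr => /(@sum_notin P _ _ _ hP) [y hy].
  exists (qn - y.2); apply/negP => H; move/negP: hy; apply; exact: mulQl.
have hex : exists a, coef h a \notin P.
  move: F2; rewrite coefMl => /(@sum_notin P _ _ _ hP) [y hy].
  exists (qn - y.2); apply/negP => H; move/negP: hy; apply; exact: PM.
have [s [gs smin]] := @ext_coef true P _ hP gex.
have [t [ht tmin]] := @ext_coef true P _ hP hex.
have st := F1 _ (@key true P _ _ _ _ hP gs ht smin tmin).
apply/negPn/negP => g0.
have s0 : s <= 0.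
  rewrite leNgt; apply/negP => H; by move: g0; rewrite smin.
apply: gnc => a a0; apply/eqP/negPn/negP => ga.
have apos : 0 < a by rewrite lt_neqAle eq_sym a0 Mge // (@coef_M M g _ gM ga).
have gex0 : exists a, coef g a \notin [pred x : R | x == 0] by exists a; rewrite inE.
have htnz : coef h t \notin [pred x : R | x == 0].
  by rewrite inE; apply/eqP => H; move: ht; rewrite H P0.
have hex0 : exists a, coef h a \notin [pred x : R | x == 0] by exists t.
have [S [gS Smax]] := @ext_coef false _ _ qideal0 gex0.
have [T [hT Tmax]] := @ext_coef false _ _ qideal0 hex0.
have aS : a <= S.
  rewrite leNgt; apply/negP => H; have := Smax _ H; rewrite inE; exact/negP.
have tT : t <= T.
  rewrite leNgt; apply/negP => H; have := Tmax _ H; exact/negP.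
have := F3 (S + T); rewrite -[_ != 0]/(_ \notin [pred x : R | x == 0]).
move=> /(_ (@key false _ _ _ _ _ qideal0 gS hT Smax Tmax)) => H; lra.
Qed.

End S.

Lemma coef_canon (R : idomainType) n (alpha : nat -> R) q u :
  coef (canon_sum n alpha q) u = \sum_(j <- iota 0 n.+1 | q j == u) alpha j.
Proof. by rewrite /coef /canon_sum big_map. Qed.

Theorem mainTheorem3 (M : {pred rat}) (R : idomainType)
  (n : nat) (alpha : nat -> R) (q : nat -> rat) (P : {pred R}) :
  puiseux_monoid M ->
  (0 < n)%N ->
  (* canonical form: q_n > ... > q_1 > q_0 = 0, exponents in M, coefficients nonzero *)
  q 0%N = 0 ->
  (forall j, (j < n)%N -> q j < q j.+1) ->
  (forall j, (j <= n)%N -> q j \in M) ->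
  (forall j, (j <= n)%N -> alpha j != 0) ->
  (* P is a prime ideal of R *)
  idealr_closed P -> prime_idealr_closed P ->
  alpha n \notin P ->
  (forall j, (j < n)%N -> alpha j \in P) ->
  ~ in_ideal_sq P (alpha 0%N) ->
  ~ (exists g h : fsum R,
       [/\ in_semiring M g, in_semiring M h,
           ~ is_const g, ~ is_const h &
           feq (canon_sum n alpha q) (fmul g h)]).
Proof.
move=> [M0 MD Mge] n0 q0 qlt qM anz Pid Ppr an aP a0 [g [h [gM hM gnc hnc fe]]].
have hP := @qidealP R P Pid Ppr.
have hP' := hP; case: hP' => P0 PD PM Pp.
have qmon k : forall j, (j + k <= n)%N -> q j <= q (j + k)%N.
  elim: k => [|k IH] j hj; first by rewrite ?addn0.
  rewrite addnS; apply: le_trans (IH j _) _; first by apply: leq_trans hj; rewrite leq_add2l.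
  by apply/ltW/qlt; rewrite -addnS.
have qle j : (j <= n)%N -> q j <= q n.
  by move=> hj; have := qmon (n - j)%N j; rewrite subnKC //; apply.
have qpos j : (0 < j)%N -> (j <= n)%N -> 0 < q j.
  move=> j0 jn; rewrite -q0; apply: lt_le_trans (qlt 0%N n0) _.
  have := qmon j.-1 1%N; rewrite -[(1 + j.-1)%N]/(j.-1.+1) prednK //; by apply.
set f := canon_sum n alpha q.
have S0 u : \sum_(j <- iota 0 n | q j == u) alpha j \in P.
  rewrite big_seq_cond; apply: (@sumQ R P) => // i /andP[jI _]; move: jI; rewrite mem_iota add0n => /andP[_ jn].
  exact: aP.
have split u : coef f u = \sum_(j <- iota 0 n | q j == u) alpha j +
    (if q n == u then alpha n else 0).
  by rewrite coef_canon -addn1 iotaD big_cat /= big_cons big_nil add0n addr0.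
have F1 u : coef f u \notin P -> u = q n.
  rewrite split; case: eqP => // _; by rewrite addr0 S0.
have F2 : coef f (q n) \notin P by rewrite split eqxx; apply: (@addQn R P).
have F3 u : coef f u != 0 -> u <= q n.
  rewrite leNgt; apply: contraNN => H; rewrite coef_canon big_seq_cond big1 //.
  move=> j /andP[]; rewrite mem_iota add0n ltnS => /andP[_ jn] /eqP qj.
  by move: H; rewrite -qj ltNge qle.
have F4 : coef f 0 = alpha 0%N.
  rewrite coef_canon big_cons q0 eqxx big_seq_cond big1 ?addr0 //.
  move=> j /andP[]; rewrite mem_iota => /andP[j0 jn] /eqP qj.
  by move: (qpos j j0 jn); rewrite qj ltxx.
have g0 : coef g 0 \in P.
  apply: (@side R M P g h (q n) Mge hP gM hM gnc) => [u|| u]; rewrite -fe.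
  - exact: F1.
  - exact: F2.
  - exact: F3.
have h0 : coef h 0 \in P.
  apply: (@side R M P h g (q n) Mge hP hM gM hnc) => [u|| u]; rewrite -coefC -fe.
  - exact: F1.
  - exact: F2.
  - exact: F3.
apply: a0; exists [:: (coef g 0, coef h 0)]; split; first by rewrite /= g0 h0.
by rewrite big_seq1 /= -(@coef0 R M g h Mge gM hM) -fe F4.
Qed.
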